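(* Let $T$ be the operator on $H^2$ given by $Tf=\sum_{m=0}^\infty\left(\sum_{n=0}^\infty n!\,\hat f(n+m)\right)z^m$, with domain $D(T)=\{f\in H^2: Tf\in H^2\}$ (i.e. those $f$ for which every inner series converges and the resulting coefficient sequence is square summable). Then $D(T)$ is not shift invariant: there exists $f\in D(T)$ with $zf\notin D(T)$.
   Context: $H^2$ is the Hardy space of analytic functions $f(z)=\sum_{n\ge0}\hat f(n)z^n$ on the unit disc with $\sum|\hat f(n)|^2<\infty$. *)

(* Defs.v *)
From Stdlib Require Import Reals Arith.
From Coquelicot Require Import Coquelicot.
Open Scope R_scope.

(* An element of H^2 is identified with its Taylor coefficient sequence
   a : nat -> C, a n = \hat f(n). *)
Definition inH2 (a : nat -> C) : Prop :=
  ex_series (fun n => (Cmod (a n)) ^ 2).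

Definition T_term (a : nat -> C) (m n : nat) : C :=
  Cmult (RtoC (INR (Factorial.fact n))) (a (n + m)%nat).

Definition is_T (a b : nat -> C) : Prop :=
  forall m : nat, is_series (T_term a m) (b m).

Definition in_domT (a : nat -> C) : Prop :=
  inH2 a /\ exists b : nat -> C, is_T a b /\ inH2 b.

Definition shiftz (a : nat -> C) : nat -> C :=
  fun k => match k with O => RtoC 0 | S k' => a k' end.

(* Main.v *)
Require Import Defs.
From Stdlib Require Import Reals.
From Coquelicot Require Import Coquelicot.
From Stdlib Require Import Lra Lia Psatz Arith Factorial.
Open Scope R_scope.

Lemma sum_RtoC (f : nat -> R) n :
  sum_n (fun k => RtoC (f k)) n = RtoC (sum_n f n).
Proof.
  induction n.
  - now rewrite !sum_O.
  - rewrite !sum_Sn, IHn. unfold plus; simpl. now rewrite RtoC_plus.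
Qed.

Lemma is_series_RtoC (f : nat -> R) l :
  is_series f l -> is_series (fun k => RtoC (f k)) (RtoC l).
Proof.
  intros H. unfold is_series.
  apply filterlim_ext with (fun n => RtoC (sum_n f n)).
  { intros n; now rewrite sum_RtoC. }
  apply filterlim_comp with (locally l); [exact H|].
  intros P [eps HP]. exists eps. intros y Hy. apply HP.
  split; simpl; [exact Hy | apply ball_center].
Qed.

Lemma is_series_Re (f : nat -> R) l :
  is_series (fun k => RtoC (f k)) l -> is_series f (Re l).
Proof.
  intros H. unfold is_series in *.
  apply filterlim_ext with (fun n => Re (RtoC (sum_n f n))).
  { intros n; reflexivity. }
  apply filterlim_ext with (fun n => Re (sum_n (fun k => RtoC (f k)) n)) .
  { intros n; now rewrite sum_RtoC. }
  apply filterlim_comp with (locally l); [exact H|].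
  intros P [eps HP]. exists eps. intros y [Hy _]. apply HP. exact Hy.
Qed.

Lemma tele_sum n :
  sum_n (fun k => / (INR k + 1) - / (INR k + 2)) n = 1 - / (INR n + 2).
Proof.
  induction n.
  - rewrite sum_O. simpl. field.
  - rewrite sum_Sn, IHn, S_INR. unfold plus; simpl.
    pose proof (pos_INR n). field. lra.
Qed.

Lemma tele_series :
  is_series (fun k => / (INR k + 1) - / (INR k + 2)) 1.
Proof.
  unfold is_series.
  apply filterlim_ext with (fun n => 1 - / (INR n + 2)).
  { intros n; now rewrite tele_sum. }
  assert (H : is_lim_seq (fun n => 1 - / (INR n + 2)) (1 - 0)).
  { apply is_lim_seq_minus'. apply is_lim_seq_const.
    assert (H2 : is_lim_seq (fun n => INR n + 2) p_infty).
    { apply is_lim_seq_plus with p_infty 2.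
      apply is_lim_seq_INR. apply is_lim_seq_const. simpl. reflexivity. }
    apply (is_lim_seq_inv _ _ H2). discriminate. }
  rewrite Rminus_0_r in H. exact H.
Qed.

Lemma fact_ineq n m :
  (fact n * (n + 1) * (n + 2) * fact m <= fact (n + m + 2))%nat.
Proof.
  induction m.
  - replace (n + 0 + 2)%nat with (S (S n)) by lia.
    simpl fact. nia.
  - replace (n + S m + 2)%nat with (S (n + m + 2)) by lia.
    change (fact (S (n + m + 2))) with (S (n+m+2) * fact (n+m+2))%nat.
    change (fact (S m)) with (S m * fact m)%nat. nia.
Qed.

Definition r (m n : nat) : R := INR (fact n) * / INR (fact (n + m + 2)).

Lemma r_pos m n : 0 <= r m n.
Proof.
  unfold r. pose proof (INR_fact_lt_0 n). pose proof (INR_fact_lt_0 (n+m+2)).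
  apply Rmult_le_pos. lra. left. now apply Rinv_0_lt_compat.
Qed.

Lemma r_bound m n :
  r m n <= / INR (fact m) * (/ (INR n + 1) - / (INR n + 2)).
Proof.
  unfold r. pose proof (INR_fact_lt_0 n). pose proof (INR_fact_lt_0 m).
  pose proof (INR_fact_lt_0 (n+m+2)). pose proof (pos_INR n).
  pose proof (fact_ineq n m) as Hf. apply le_INR in Hf.
  rewrite !mult_INR, !plus_INR in Hf. simpl INR in Hf.
  replace (/ INR (fact m) * (/ (INR n + 1) - / (INR n + 2)))
    with (INR (fact n) * / (INR (fact n) * (INR n + 1) * (INR n + 2) * INR (fact m))).
  2:{ field. repeat split; lra. }
  apply Rmult_le_compat_l. lra.
  apply Rinv_le_contravar. 2: exact Hf.
  repeat apply Rmult_lt_0_compat; lra.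
Qed.

Lemma ex_r m : ex_series (r m).
Proof.
  apply (ex_series_le (V := R_CompleteNormedModule)) with
    (fun n => / INR (fact m) * (/ (INR n + 1) - / (INR n + 2))).
  - intros n. change (norm ?x) with (Rabs x). rewrite Rabs_pos_eq by apply r_pos. apply r_bound.
  - apply (ex_series_scal_l (V := R_NormedModule)). eexists. apply tele_series.
Qed.

Lemma Series_r m : 0 <= Series (r m) <= / INR (fact m).
Proof.
  split.
  - replace 0 with (Series (fun n => 0 * r m n)) at 1 by (rewrite Series_scal_l; ring).
    apply Series_le. intros n; pose proof (r_pos m n); split; lra. apply ex_r.
  - replace (/ INR (fact m)) with
      (Series (fun n => / INR (fact m) * (/ (INR n + 1) - / (INR n + 2)))).
    + apply Series_le. intros n; split. apply r_pos. apply r_bound.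
      apply (ex_series_scal_l (V := R_NormedModule)). eexists. apply tele_series.
    + rewrite Series_scal_l. rewrite (is_series_unique _ _ tele_series). ring.
Qed.

Lemma pow2_fact m : (2 ^ m <= 2 * fact m * fact m)%nat.
Proof.
  induction m.
  - simpl. lia.
  - change (fact (S m)) with (S m * fact m)%nat. rewrite Nat.pow_succ_r'.
    destruct m. simpl. lia. nia.
Qed.

Lemma ex_inv_fact2 : ex_series (fun m => (/ INR (fact m)) ^ 2).
Proof.
  apply (ex_series_le (V := R_CompleteNormedModule)) with (fun m => (/2) ^ m * 2).
  - intros m. change (norm ?x) with (Rabs x).
    pose proof (INR_fact_lt_0 m).
    rewrite Rabs_pos_eq. 2: { apply pow_le. left; now apply Rinv_0_lt_compat. }
    pose proof (pow2_fact m) as H2. apply le_INR in H2.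
    rewrite !mult_INR, pow_INR in H2. simpl INR in H2.
    rewrite <- Rinv_pow by lra. rewrite <- Rinv_pow by lra.
    pose proof (pow_lt 2 m ltac:(lra)).
    replace (/ 2 ^ m * 2) with (/ (2 ^ m / 2)) by (field; lra).
    apply Rinv_le_contravar. lra. simpl. replace (1+1) with 2 in H2 by ring. lra.
  - apply ex_series_scal_r. apply ex_series_geom. rewrite Rabs_pos_eq; lra.
Qed.

Definition a0 (n : nat) : C := RtoC (/ INR (fact (n + 2))).

Lemma a0_in_domT : in_domT a0.
Proof.
  split.
  - unfold inH2.
    apply (ex_series_le (V := R_CompleteNormedModule)) with (fun m => (/ INR (fact m)) ^ 2).
    + intros n. change (norm ?x) with (Rabs x). unfold a0. rewrite Cmod_R.
      pose proof (INR_fact_lt_0 n). pose proof (INR_fact_lt_0 (n+2)).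
      rewrite (Rabs_pos_eq (/ INR (fact (n + 2)))) by (left; now apply Rinv_0_lt_compat).
      rewrite Rabs_pos_eq. 2: { apply pow_le. left; now apply Rinv_0_lt_compat. }
      apply pow_incr. split. left; now apply Rinv_0_lt_compat.
      apply Rinv_le_contravar. lra. apply le_INR, fact_le. lia.
    + apply ex_inv_fact2.
  - exists (fun m => RtoC (Series (r m))). split.
    + intros m. apply is_series_ext with (fun n => RtoC (r m n)).
      { intros n. unfold T_term, a0, r. now rewrite RtoC_mult. }
      apply is_series_RtoC. apply Series_correct, ex_r.
    + unfold inH2.
      apply (ex_series_le (V := R_CompleteNormedModule)) with (fun m => (/ INR (fact m)) ^ 2).
      * intros m. change (norm ?x) with (Rabs x). rewrite Cmod_R.
        destruct (Series_r m) as [H1 H2].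
        rewrite (Rabs_pos_eq (Series (r m))) by exact H1.
        rewrite Rabs_pos_eq by (apply pow_le; exact H1).
        apply pow_incr. lra.
      * apply ex_inv_fact2.
Qed.

Definition s0 (n : nat) : R := match n with O => 0 | S k => / (INR k + 2) end.

Lemma T_shift n : T_term (shiftz a0) 0 n = RtoC (s0 n).
Proof.
  unfold T_term. destruct n.
  - simpl. now rewrite Cmult_0_r.
  - simpl (shiftz a0 (S n + 0)). rewrite Nat.add_0_r. unfold a0.
    rewrite <- RtoC_mult. f_equal.
    replace (n + 2)%nat with (S (S n)) by lia.
    change (fact (S (S n))) with (S (S n) * fact (S n))%nat.
    rewrite mult_INR. pose proof (INR_fact_lt_0 (S n)). pose proof (pos_INR n).
    rewrite !S_INR. simpl s0. field. lra.
Qed.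

Lemma sum_lb (f : nat -> R) c n k :
  (forall j, (n <= j <= n + k)%nat -> c <= f j) ->
  INR (S k) * c <= sum_n_m f n (n + k).
Proof.
  induction k; intros H.
  - rewrite Nat.add_0_r, sum_n_n. simpl. specialize (H n ltac:(lia)). lra.
  - replace (n + S k)%nat with (S (n + k)) by lia.
    rewrite sum_n_Sm by lia. change (plus ?x ?y) with (x + y).
    assert (IH := IHk (fun j Hj => H j ltac:(lia))).
    specialize (H (S (n + k)) ltac:(lia)).
    rewrite S_INR. lra.
Qed.

Lemma s0_not_ex : ~ ex_series s0.
Proof.
  intros H0. pose proof (Cauchy_ex_series (V := R_CompleteNormedModule) s0 H0) as H.
  destruct (H (mkposreal (1/4) ltac:(lra))) as [N HN].
  specialize (HN (S N) (S N + N)%nat ltac:(lia) ltac:(lia)).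
  simpl in HN. change (norm ?x) with (Rabs x) in HN.
  assert (Hb : INR (S N) * / (2 * INR N + 2) <= sum_n_m s0 (S N) (S N + N)).
  { apply sum_lb. intros j Hj. destruct j as [|j]. lia.
    simpl s0. pose proof (pos_INR j). pose proof (pos_INR N).
    apply Rinv_le_contravar. lra.
    assert (Hj2 : INR j <= INR (N + N)) by (apply le_INR; lia).
    rewrite plus_INR in Hj2. lra. }
  pose proof (pos_INR N).
  replace (INR (S N) * / (2 * INR N + 2)) with (1/2) in Hb.
  2: { rewrite S_INR. field. lra. }
  pose proof (Rle_abs (sum_n_m s0 (S N) (S (N + N)))). replace (S N + N)%nat with (S (N + N)) in Hb by lia.
  assert (H3 : 1/2 <= Rabs (sum_n_m s0 (S N) (S (N + N)))) by lra.
  pose proof (Rle_lt_trans _ _ _ H3 HN). lra.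
Qed.

Theorem corollary2 :
  exists a : nat -> C, in_domT a /\ ~ in_domT (shiftz a).
Proof.
  exists a0. split. apply a0_in_domT.
  intros [_ [b [Hb _]]].
  specialize (Hb 0%nat).
  apply is_series_ext with (b := fun n => RtoC (s0 n)) in Hb.
  2: apply T_shift.
  apply is_series_Re in Hb. apply s0_not_ex. eexists. exact Hb.
Qed.
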